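(* Let $\langle V, Q\rangle$ be a Federated Byzantine Agreement System with quorum slice cardinality map $C$. For each $v\in V$ let $\bar q_v=\bigcup_{q\in Q(v)} q$. Define functions $F_i : V\to\mathbb{N}$ for $i\geq 0$ by $F_0(v)=C(v)$ and, for $i\ge 0$, letting $S_i^{v}$ be the sequence of values $(F_i(v') : v'\in \bar q_v)$ sorted in ascending order (one entry per node of $\bar q_v$) and $S_i^v[C(v)]$ its $C(v)$-th element (1-indexed), $$F_{i+1}(v)=\max\{S_i^v[C(v)],\ F_i(v)\}.$$ Then for every $i\geq 0$, every $v\in V$ and every quorum $U$ with $v\in U$, we have $F_i(v)\leq |U|$.
   Context: An FBAS is a pair $\langle V, Q\rangle$ where $V$ is a finite set of nodes and $Q : V \to 2^{2^V}\setminus\{\varnothing\}$ assigns to each node a nonempty collection of subsets of $V$ (its quorum slices), such that for all $v\in V$ and all $q\in Q(v)$, $v \in q$. A set $U \subseteq V$ is a quorum iff $U\neq\varnothing$ and for every $u\in U$ there exists $q \in Q(u)$ with $q\subseteq U$. The quorum slice cardinality map is $C(v)=\min\{|q| : q\in Q(v)\}$. *)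

(* Defs.v *)
From mathcomp Require Import all_boot.
Set Implicit Arguments. Unset Strict Implicit. Unset Printing Implicit Defensive.

Definition is_FBAS (V : finType) (Q : V -> {set {set V}}) : Prop :=
  forall v : V, Q v != set0 /\ (forall q, q \in Q v -> v \in q).

Definition is_quorum (V : finType) (Q : V -> {set {set V}}) (U : {set V}) : Prop :=
  U != set0 /\ forall u, u \in U -> exists2 q, q \in Q u & q \subset U.

(* C(v) = min { |q| : q in Q(v) }; the default #|V| is an upper bound of
   every |q|, so it is irrelevant when Q v is nonempty. *)
Definition slice_card (V : finType) (Q : V -> {set {set V}}) (v : V) : nat :=
  \big[minn/#|V|]_(q in Q v) #|q|.

Definition qbar (V : finType) (Q : V -> {set {set V}}) (v : V) : {set V} :=
  \bigcup_(q in Q v) q.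

Definition Sseq (V : finType) (Q : V -> {set {set V}}) (f : V -> nat) (v : V)
  : seq nat := sort leq [seq f v' | v' <- enum (qbar Q v)].

(* F_i ; S[k] (1-indexed) is nth 0 S k.-1 *)
Fixpoint Fseq (V : finType) (Q : V -> {set {set V}}) (i : nat) : V -> nat :=
  match i with
  | 0 => fun v => slice_card Q v
  | i'.+1 => fun v =>
      maxn (nth 0 (Sseq Q (Fseq Q i') v) (slice_card Q v).-1) (Fseq Q i' v)
  end.

(* Main.v *)
Require Import Defs.
From mathcomp Require Import all_boot.

Lemma sorted_nth_le (s : seq nat) (b k : nat) :
  sorted leq s -> k < count (fun x => x <= b) s -> nth 0 s k <= b.
Proof.
elim: s k => [|x s IH] k //= Hs.
case: k => [|k] /=.
  case: (boolP (x <= b)) => // Hxb /= Hc.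
  have := order_path_min leq_trans Hs => /allP Hall.
  have [y ys yb] : exists2 y, y \in s & y <= b.
    by apply/hasP; rewrite has_count.
  by rewrite (leq_trans (Hall y ys) yb) in Hxb.
move=> Hc; apply: IH; first exact: path_sorted Hs.
case: (x <= b) Hc => Hc; first by rewrite add1n ltnS in Hc.
by rewrite add0n in Hc; exact: ltnW.
Qed.

Lemma bigmin_le (T : finType) (P : pred T) (F : T -> nat) (x : nat) (j : T) :
  P j -> \big[minn/x]_(i | P i) F i <= F j.
Proof.
move=> Pj; rewrite -big_filter.
have : j \in [seq i <- index_enum T | P i] by rewrite mem_filter Pj /index_enum -enumT mem_enum.
elim: [seq i <- index_enum T | P i] => [|y s IH] //=.
rewrite inE big_cons => /orP [/eqP -> | js]; first exact: geq_minl.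
exact: leq_trans (geq_minr _ _) (IH js).
Qed.

Theorem mainTheorem3 (V : finType) (Q : V -> {set {set V}}) :
  is_FBAS Q ->
  forall (i : nat) (v : V) (U : {set V}),
    is_quorum Q U -> v \in U -> Fseq Q i v <= #|U|.
Proof.
move=> HF i; elim: i => [|i IH] v U [HU0 HU] vU.
  have [q qQ qU] := HU v vU.
  rewrite /= /slice_card.
  apply: (leq_trans _ (subset_leq_card qU)); exact: bigmin_le.
have [q qQ qU] := HU v vU.
rewrite /= geq_max; apply/andP; split; last exact: IH.
have Cq : slice_card Q v <= #|q|.
  exact: bigmin_le.
have q1 : 0 < #|q| by apply/card_gt0P; exists v; apply: (proj2 (HF v)).
apply: sorted_nth_le; first exact: sort_sorted leq_total _.
rewrite count_sort count_map -size_filter.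
apply: (leq_trans _ (uniq_leq_size (enum_uniq (mem q)) _)).
  by rewrite -cardE; case: (slice_card Q v) Cq => //= n; rewrite ltnS.
move=> x; rewrite mem_enum => xq.
rewrite mem_filter mem_enum /= (IH x U) //; last by apply: (subsetP qU).
by apply/bigcupP; exists q.
Qed.
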